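(* Let $x\in V(D^+)\setminus\{s\}$. For any $y\in C(x)$, $I_s(x)\preceq I_s(y)$.
   Context: $G=(V,E,w)$ is a simple, connected, undirected graph with positive edge lengths, $s,t\in V$. $D$ is the union of all shortest $st$-paths of $G$, and $D^+$ is the directed acyclic graph obtained from $D$ by orienting every edge toward $t$. For $x,y\in V(D^+)$, $x\prec y$ means $x$ is an ancestor of $y$ in $D^+$ (a directed path of positive length from $x$ to $y$ exists), and $x\preceq y$ means $x\prec y$ or $x=y$. For $x\neq s$, $v\neq x$ is an $s$-dominator of $x$ if every directed path from $s$ to $x$ in $D^+$ contains $v$, and $I_s(x)$ is the $s$-dominator of $x$ closest to $x$ (every other $s$-dominator of $x$ is an $s$-dominator of $I_s(x)$). For $x\neq s$, $C(x)=\{v\in V(D^+): I_s(x)\prec v\prec x\}$. *)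

(* Defs.v *)
From mathcomp Require Import all_boot all_order all_algebra.
From Stdlib Require Import Relations.
Set Implicit Arguments. Unset Strict Implicit. Unset Printing Implicit Defensive.
Import Order.TTheory GRing.Theory Num.Theory.
Local Open Scope ring_scope.

Section ShortestPathDAG.
Variables (R : realFieldType) (V : finType) (e : rel V) (w : V -> V -> R) (s t : V).

Fixpoint wlen (x : V) (p : seq V) : R :=
  match p with [::] => 0 | y :: p' => w x y + wlen y p' end.

(* s :: p is a shortest st-path of G: an st-walk of minimum total length
   (with positive lengths such a walk is automatically a simple path). *)
Definition shortest_st (p : seq V) : Prop :=
  [/\ path e s p, last s p = t &
      forall q, path e s q -> last s q = t -> wlen s p <= wlen s q].

Definition inD (v : V) : Prop := exists p, shortest_st p /\ v \in s :: p.

(* Arcs of D^+: edges of D oriented toward t, i.e. u -> v when u v are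
   consecutive (in this order) on some shortest st-path starting at s. *)
Definition darc (u v : V) : Prop :=
  exists p, shortest_st p /\ exists p1 p2, s :: p = p1 ++ u :: v :: p2.

Definition anc (x y : V) : Prop := clos_trans V darc x y.
Definition anceq (x y : V) : Prop := anc x y \/ x = y.

Fixpoint dchain (x : V) (q : seq V) : Prop :=
  match q with [::] => True | y :: q' => darc x y /\ dchain y q' end.

Definition sdom (x v : V) : Prop :=
  v <> x /\ forall q, dchain s q -> last s q = x -> v \in s :: q.

(* v = I_s(x): the s-dominator of x closest to x, i.e. every other
   s-dominator of x is an s-dominator of v. *)
Definition idom (x v : V) : Prop :=
  sdom x v /\ forall u, sdom x u -> u <> v -> sdom v u.

Definition inC (x v : V) : Prop :=
  inD v /\ exists ix, idom x ix /\ anc ix v /\ anc v x.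

End ShortestPathDAG.

(* Main.v *)
Require Import Defs.
From Stdlib Require Import Relations.
From mathcomp Require Import all_boot all_order all_algebra.
Import Order.TTheory GRing.Theory Num.Theory.
Local Open Scope ring_scope.
Set Implicit Arguments. Unset Strict Implicit.

Section Aux.
Variables (R : realFieldType) (V : finType) (e : rel V) (w : V -> V -> R) (s t : V).
Hypothesis w_pos : forall u v : V, e u v -> 0 < w u v.

Local Notation darc := (darc e w s t).
Local Notation anc := (anc e w s t).
Local Notation dchain := (dchain e w s t).
Local Notation shortest := (shortest_st e w s t).

Fixpoint wl (l : seq V) : R :=
  match l with x :: ((y :: _) as l') => w x y + wl l' | _ => 0 end.

Lemma wlenE x p : wlen w x p = wl (x :: p).
Proof. by elim: p x => [|y p IH] x //=; rewrite IH. Qed.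

Lemma wl_cons_cat x a v b :
  wl (x :: a ++ v :: b) = wl (x :: rcons a v) + wl (v :: b).
Proof.
elim: a x => [|y a IH] x; first by rewrite /= addr0.
have -> : wl (x :: (y :: a) ++ v :: b) = w x y + wl (y :: a ++ v :: b) by [].
have -> : wl (x :: rcons (y :: a) v) = w x y + wl (y :: rcons a v) by [].
by rewrite IH addrA.
Qed.

Lemma wl_cat a v b : wl (a ++ v :: b) = wl (rcons a v) + wl (v :: b).
Proof. case: a => [|x a] /=; first by rewrite add0r. exact: wl_cons_cat. Qed.

Lemma path_cat_cons x a v b :
  path e x (a ++ v :: b) = path e x (rcons a v) && path e v b.
Proof.
rewrite cat_path rcons_path /=. by rewrite andbA.
Qed.

Lemma sorted_cat_cons a v b :
  sorted e (a ++ v :: b) = sorted e (rcons a v) && path e v b.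
Proof. case: a => [|x a] //=. exact: path_cat_cons. Qed.

Lemma swap_le p q a b c d v :
  shortest p -> shortest q -> s :: p = a ++ v :: b -> s :: q = c ++ v :: d ->
  wl (rcons a v) <= wl (rcons c v).
Proof.
move=> [pp lp mp] [pq lq mq] hp hq.
set r := behead (c ++ v :: b).
have hr : s :: r = c ++ v :: b.
  rewrite /r; clear r; case: c hq => [|x c] /= [-> _] //.
have sp : sorted e (s :: p) by [].
rewrite hp sorted_cat_cons in sp; case/andP: sp => _ pvb.
have sq : sorted e (s :: q) by [].
rewrite hq sorted_cat_cons in sq; case/andP: sq => sq _.
have pr : path e s r.
  have : sorted e (s :: r) by rewrite hr sorted_cat_cons sq pvb.
  by [].
have lr : last s r = t.
  have -> : last s r = last s (s :: r) by [].
  rewrite hr last_cat /=.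
  have <- : last s (s :: p) = last v b by rewrite hp last_cat.
  by [].
have := mp r pr lr.
rewrite !wlenE hp hr !wl_cat.
by rewrite lerD2r.
Qed.

Definition Pot v r := exists p a b,
  [/\ shortest p, s :: p = a ++ v :: b & r = wl (rcons a v)].

Lemma pot_uniq v r1 r2 : Pot v r1 -> Pot v r2 -> r1 = r2.
Proof.
move=> [p [a [b [sp hp ->]]]] [q [c [d [sq hq ->]]]].
apply/le_anti; rewrite (swap_le sp sq hp hq) (swap_le sq sp hq hp) //.
Qed.

Lemma darc_pot u v : darc u v -> exists ru rv, [/\ Pot u ru, Pot v rv & ru < rv].
Proof.
move=> [p [sp [p1 [p2 hp]]]].
exists (wl (rcons p1 u)), (wl (rcons (rcons p1 u) v)); split.
- by exists p, p1, (v :: p2).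
- by exists p, (rcons p1 u), p2; rewrite cat_rcons.
- have := sp; case=> pp _ _.
  have : sorted e (s :: p) by [].
  rewrite hp sorted_cat_cons /= => /andP [_ /andP [euv _]].
  rewrite -[rcons (rcons p1 u) v]cats1 cat_rcons wl_cat /= addr0 ltrDl. exact: w_pos.
Qed.

Lemma anc_pot u v : anc u v -> exists ru rv, [/\ Pot u ru, Pot v rv & ru < rv].
Proof.
elim=> [x y /darc_pot //|x y z _ [r1 [r2 [h1 h2 lt12]]] _ [r3 [r4 [h3 h4 lt34]]]].
exists r1, r4; split=> //.
rewrite (pot_uniq h2 h3) in lt12. exact: lt_trans lt12 lt34.
Qed.

Lemma anc_irr u : anc u u -> False.
Proof.
move=> /anc_pot [r1 [r2 [h1 h2 lt]]].
by rewrite (pot_uniq h1 h2) ltxx in lt.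
Qed.

Lemma dchain_cat a q1 q2 :
  dchain a (q1 ++ q2) <-> dchain a q1 /\ dchain (last a q1) q2.
Proof.
elim: q1 a => [|y q1 IH] a /=; first by split=> // [[]].
have := IH y; tauto.
Qed.

Lemma dchain_anc a q : dchain a q -> q <> [::] -> anc a (last a q).
Proof.
elim: q a => [|y q IH] a //= [day dq] _.
case: q IH dq => [|z q] IH dq; first by apply: t_step.
apply: t_trans (t_step _ _ _ _ day) _. by apply: IH.
Qed.

Lemma anc_dchain a b : anc a b -> exists q, [/\ dchain a q, last a q = b & q <> [::]].
Proof.
elim=> [x y dxy|x y z _ [q1 [d1 l1 n1]] _ [q2 [d2 l2 n2]]].
  by exists [:: y].
exists (q1 ++ q2); split.
- by apply/dchain_cat; rewrite l1.
- by rewrite last_cat l1.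
- by case: q1 {d1 l1} n1.
Qed.

Lemma in_anc a q z : dchain a q -> z \in q -> anc a z.
Proof.
elim: q a => [|y q IH] a //= [day dq].
rewrite inE => /orP [/eqP ->|zq]; first exact: t_step.
apply: t_trans (t_step _ _ _ _ day) _. exact: IH.
Qed.

Lemma prefix a q z : dchain a q -> z \in a :: q ->
  exists q0, dchain a q0 /\ last a q0 = z.
Proof.
elim: q a => [|y q IH] a.
  by move=> _; rewrite inE => /eqP ->; exists [::].
move=> [day dq]; rewrite inE => /orP [/eqP ->|zq]; first by exists [::].
have [q0 [d0 l0]] := IH y dq zq.
by exists (y :: q0).
Qed.

Lemma before a q z : dchain a q -> z \in a :: q -> z <> last a q ->
  anc z (last a q).
Proof.
elim: q a => [|y q IH] a.
  by move=> _; rewrite inE => /eqP ->.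
move=> [day dq]; rewrite inE => /orP [/eqP ->|zq] hz /=.
  have := dchain_anc (q := y :: q) (a := a) (conj day dq). by apply.
exact: IH.
Qed.

Lemma shortest_dchain p : shortest p -> dchain s p.
Proof.
move=> sp.
suff H : forall q a pre, s :: p = pre ++ a :: q -> dchain a q.
  by apply: (H p s [::]).
elim=> [|y q IH] a pre hp //=; split.
- by exists p; split=> //; exists pre, q.
- by apply: (IH y (rcons pre a)); rewrite cat_rcons.
Qed.

Lemma idom_uniq x a b : (exists q, dchain s q /\ last s q = x) ->
  idom e w s t x a -> idom e w s t x b -> a = b.
Proof.
move=> [q [dq lq]] [[anx ha] Ha] [[bnx hb] Hb].
case: (eqVneq a b) => [//|/eqP nab]; exfalso.
have [sab hab] := Ha b (conj bnx hb) (nesym nab).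
have [sba hba] := Hb a (conj anx ha) nab.
have [qa [da la]] := prefix dq (ha q dq lq).
have [qb [db lb]] := prefix dq (hb q dq lq).
have h1 : anc b a by rewrite -la; apply: before => //; [apply: hab | rewrite la].
have h2 : anc a b by rewrite -lb; apply: before => //; [apply: hba | rewrite lb].
apply: (@anc_irr a). exact: (t_trans _ _ _ _ _ h2 h1).
Qed.

End Aux.

Theorem lemma3 (R : realFieldType) (V : finType) (e : rel V) (w : V -> V -> R)
    (s t : V)
    (e_irr : irreflexive e) (e_sym : symmetric e)
    (G_conn : forall u v : V, connect e u v)
    (w_sym : forall u v : V, w u v = w v u)
    (w_pos : forall u v : V, e u v -> 0 < w u v)
    (x : V) (x_in : inD e w s t x) (x_ne_s : x <> s)
    (ix : V) (ix_def : idom e w s t x ix)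
    (y : V) (y_in : inC e w s t x y)
    (iy : V) (iy_def : idom e w s t y iy) :
  anceq e w s t ix iy.
Proof.
have irr := anc_irr w_pos.
have pathto : forall z, inD e w s t z -> exists q, dchain e w s t s q /\ last s q = z.
  move=> z [p [sp zp]]; exact: prefix (shortest_dchain sp) zp.
have [yD [ix' [ix'def [aixy ayx]]]] := y_in.
have eix : ix' = ix by apply: (idom_uniq w_pos (pathto x x_in)).
subst ix'.
have sdy : sdom e w s t y ix.
  split; first by move=> eq; subst; exact: irr aixy.
  move=> q dq lq.
  have [q' [dq' lq' _]] := anc_dchain ayx.
  have dqq : dchain e w s t s (q ++ q') by apply/dchain_cat; rewrite lq.
  have := ix_def.1.2 _ dqq; rewrite last_cat lq lq' => /(_ erefl).
  rewrite -cat_cons mem_cat => /orP [//|hq'].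
  have H : anc e w s t y ix by apply: (in_anc dq' hq').
  by exfalso; exact: (irr _ _ _ (t_trans _ _ _ _ _ aixy H)).
case: (eqVneq ix iy) => [->|/eqP nxy]; first by right.
have [ixniy hix] := iy_def.2 ix sdy nxy.
have [q [dq lq]] := pathto y yD.
have [q0 [d0 l0]] := prefix dq (iy_def.1.2 q dq lq).
left; rewrite -l0; apply: before => //; first by apply: hix.
by rewrite l0.
Qed.
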